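(* Let $U\in\mathcal C_n$ be a Clifford unitary with tableau $\begin{bmatrix}A&B\\C&D\end{bmatrix}$. Let $z\in\mathrm{supp}(U|0\rangle^{\otimes n})$ and let $r\in\{0,1\}^n$ be uniformly random. Then $rC\oplus z\in\mathrm{supp}(U|0\rangle^{\otimes n})$, and $rC\oplus z$ is a uniformly random element of $\mathrm{supp}(U|0\rangle^{\otimes n})$.
   Context: $\mathcal C_n$ is the $n$-qubit Clifford group (unitaries $U$ with $U\mathcal P_nU^\dagger=\mathcal P_n$, $\mathcal P_n$ the Pauli group). For $a\in\mathbb F_2^n$, $X^a=X^{a_1}\otimes\cdots\otimes X^{a_n}$ and similarly $Z^a$; $e_i$ is the $i$-th standard basis vector. The tableau of $U$ (ignoring signs) is the $2n\times 2n$ binary matrix $\begin{bmatrix}A&B\\C&D\end{bmatrix}$ with $A,B,C,D\in\mathbb F_2^{n\times n}$, where the $i$-th row of $A$ (resp. $B$) is the $X$-part (resp. $Z$-part) of the Pauli string $UX^{e_i}U^\dagger=\pm X^{a}Z^{b}$ (up to phase), and the $i$-th row of $C$ (resp. $D$) is the $X$-part (resp. $Z$-part) of $UZ^{e_i}U^\dagger$. For $|\psi\rangle=\sum_x\alpha_x|x\rangle$, $\mathrm{supp}(|\psi\rangle)=\{x:\alpha_x\ne0\}$. Here $rC$ is the row vector product over $\mathbb F_2$. *)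

(* Defs.v *)
(* Complex scalars: an arbitrary numClosedFieldType C
   (e.g. algC, or complex R over a real closed field), with conjugation z^* and 'i. *)
From HB Require Import structures.
From mathcomp Require Import all_boot all_order all_algebra.
Set Implicit Arguments. Unset Strict Implicit. Unset Printing Implicit Defensive.
Import Order.TTheory GRing.Theory Num.Theory.
Local Open Scope ring_scope.

Definition bits (n : nat) := 'rV['F_2]_n.

Definition ebit (n : nat) (i : 'I_n) : bits n := delta_mx 0 i.

Definition dotb (n : nat) (b x : bits n) : 'F_2 := (b *m x^T) 0 0.

(* n-qubit operators: square complex matrices indexed by the computational
   basis {|x> : x in F_2^n} (via enum_val / enum_rank), of size #|bits n| = 2^n. *)
Definition Op (C : numClosedFieldType) (n : nat) := 'M[C]_#|{: bits n}|.

Definition entry (C : numClosedFieldType) n (M : Op C n) (y x : bits n) : C :=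
  M (enum_rank y) (enum_rank x).

Definition adj (C : numClosedFieldType) n (M : Op C n) : Op C n :=
  (map_mx (@Num.conj C) M)^T.

Definition unitary (C : numClosedFieldType) n (U : Op C n) : Prop :=
  U *m adj U = 1%:M /\ adj U *m U = 1%:M.

(* The Pauli string X^a Z^b : |x> |-> (-1)^{b.x} |x + a>. *)
Definition pauliXZ (C : numClosedFieldType) n (a b : bits n) : Op C n :=
  \matrix_(i, j)
    let y := enum_val i in let x := enum_val j in
    ((y == x + a)%:R * (if dotb b x == 0 then 1 else -1)).

Definition pauli_group (C : numClosedFieldType) n (P : Op C n) : Prop :=
  exists (k : nat) (a b : bits n), P = 'i ^+ k *: pauliXZ C a b.

Definition clifford (C : numClosedFieldType) n (U : Op C n) : Prop :=
  unitary U /\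
  (forall P : Op C n, pauli_group P -> pauli_group (U *m P *m adj U)) /\
  (forall Q : Op C n, pauli_group Q ->
      exists2 P : Op C n, pauli_group P & Q = U *m P *m adj U).

(* [A B; C D] is the (sign-free) tableau of U: row i of A/B is the X-/Z-part of
   U X^{e_i} U^dagger, row i of C/D that of U Z^{e_i} U^dagger (up to phase). *)
Definition tableau (C : numClosedFieldType) n (U : Op C n)
    (TA TB TC TD : 'M['F_2]_n) : Prop :=
  forall i : 'I_n,
    (exists k : nat, U *m pauliXZ C (ebit i) 0 *m adj U
                     = 'i ^+ k *: pauliXZ C (row i TA) (row i TB)) /\
    (exists k : nat, U *m pauliXZ C 0 (ebit i) *m adj U
                     = 'i ^+ k *: pauliXZ C (row i TC) (row i TD)).

Definition supp0 (C : numClosedFieldType) n (U : Op C n) : {set bits n} :=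
  [set x : bits n | entry U x 0 != 0].

(* Main.v *)
Require Import Defs.
From HB Require Import structures.
From mathcomp Require Import all_boot all_order all_algebra.
Set Implicit Arguments. Unset Strict Implicit. Unset Printing Implicit Defensive.
Import Order.TTheory GRing.Theory Num.Theory.
Local Open Scope ring_scope.

Lemma F2cases (x : 'F_2) : x = 0 \/ x = 1.
Proof. case: x => [[|[|m]] hm] //; [left|right]; exact/val_inj. Qed.

Section S.
Variables (C : numClosedFieldType) (n : nat).
Definition sgn (b x : bits n) : C := if dotb b x == 0 then 1 else -1.

Lemma pauli_mull (a b : bits n) (M : Op C n) i j :
  (pauliXZ C a b *m M) i j = sgn b (enum_val i - a) * M (enum_rank (enum_val i - a)) j.
Proof.
rewrite !mxE (bigD1 (enum_rank (enum_val i - a))) //= mxE enum_rankK /= subrK eqxx mul1r.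
rewrite big1 ?addr0 // => k hk; rewrite mxE /=.
case: eqP => h; last by rewrite !mul0r.
by case/eqP: hk; rewrite h addrK enum_valK.
Qed.

Lemma pauli_mulr (a b : bits n) (M : Op C n) i j :
  (M *m pauliXZ C a b) i j = M i (enum_rank (enum_val j + a)) * sgn b (enum_val j).
Proof.
rewrite !mxE (bigD1 (enum_rank (enum_val j + a))) //= mxE enum_rankK /= eqxx mul1r.
rewrite big1 ?addr0 // => k hk; rewrite mxE /=.
case: eqP => h; last by rewrite !mul0r mulr0.
by case/eqP: hk; rewrite -h enum_valK.
Qed.

Lemma dotb_ebit (i : 'I_n) (x : bits n) : dotb (ebit i) x = x 0 i.
Proof. by rewrite /dotb /ebit -rowE !mxE. Qed.

Lemma dotb0 (b : bits n) : dotb b 0 = 0.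
Proof. by rewrite /dotb trmx0 mulmx0 mxE. Qed.

Variable TC : 'M['F_2]_n.
Definition inV (x : bits n) := exists r : bits n, x = r *m TC.
Definition vsupp (M : Op C n) := forall i j, M i j != 0 -> inV (enum_val i - enum_val j).

Lemma vsuppD M N : vsupp M -> vsupp N -> vsupp (M + N).
Proof.
move=> hM hN i j; rewrite mxE => h.
case: (eqVneq (M i j) 0) => [e|]; last exact: hM.
by apply: hN; move: h; rewrite e add0r.
Qed.

Lemma vsuppZ a M : vsupp M -> vsupp (a *: M).
Proof. by move=> hM i j; rewrite mxE mulf_eq0 negb_or => /andP[_]; apply: hM. Qed.

Lemma vsupp1 : vsupp 1%:M.
Proof.
move=> i j; rewrite mxE; case: (eqVneq i j) => [->|]; last by rewrite mulr0n eqxx.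
by move=> _; exists 0; rewrite subrr mul0mx.
Qed.

Lemma vsuppM M N : vsupp M -> vsupp N -> vsupp (M *m N).
Proof.
move=> hM hN i j; rewrite mxE.
case: (pickP (fun k => M i k * N k j != 0)) => [k /= hk _ | h0]; last first.
  by rewrite big1 ?eqxx // => k _; apply/eqP; move: (h0 k) => /= /negbFE.
move: hk; rewrite mulf_eq0 negb_or => /andP[h1 h2].
case: (hM _ _ h1) => r1 e1; case: (hN _ _ h2) => r2 e2.
by exists (r1 + r2); rewrite mulmxDl -e1 -e2 addrA subrK.
Qed.

Lemma vsupp_pauli (i : 'I_n) d : vsupp (pauliXZ C (row i TC) d).
Proof.
move=> a b; rewrite mxE /=; case: (eqVneq (enum_val a) (enum_val b + row i TC)) => [->|]; last by rewrite mul0r eqxx.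
by move=> _; exists (ebit i); rewrite addrAC subrr add0r /ebit -rowE.
Qed.
End S.

Section T.
Variables (C : numClosedFieldType) (n : nat).
Definition Hm (i : 'I_n) : Op C n := 2%:R^-1 *: (1%:M + pauliXZ C 0 (ebit i)).
Definition E0 : Op C n := \matrix_(a, b) ((a == b) && (enum_val a == 0))%:R.
Definition foldH s := foldr (fun i M => Hm i *m M) 1%:M s.

Lemma half2 (x : C) : 2%:R^-1 * (x *+ 2) = x.
Proof. by rewrite -(mulr_natl x 2) mulrA mulVf ?mul1r // pnatr_eq0. Qed.

Lemma foldHE s : foldH s =
  \matrix_(a, b) ((a == b) && all (fun i => (enum_val a : bits n) 0 i == 0) s)%:R.
Proof.
elim: s => [|i s IH] /=.
  by apply/matrixP => a b; rewrite !mxE andbT.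
rewrite IH; apply/matrixP => a b.
rewrite /Hm -scalemxAl mulmxDl mul1mx mxE [in X in _ * X]mxE pauli_mull subr0 enum_valK !mxE /sgn dotb_ebit.
case: (eqVneq ((enum_val a : bits n) 0 i) 0) => _ /=.
  rewrite mul1r -mulr2n.
  apply: half2.
by rewrite andbF mulN1r subrr mulr0.
Qed.

Lemma foldE0 : foldH (enum 'I_n) = E0.
Proof.
apply/matrixP => a b; rewrite foldHE !mxE.
suff -> : all (fun i => (enum_val a : bits n) 0 i == 0) (enum 'I_n) = (enum_val a == 0) by [].
apply/allP/eqP => [h|->]; last by move=> i _; rewrite mxE.
apply/matrixP => p q; rewrite (ord1 p) mxE; apply/eqP/h; by rewrite mem_enum.
Qed.

Lemma UE0 (U : Op C n) a b :
  (U *m E0 *m adj U) a b = U a (enum_rank 0) * (U b (enum_rank 0))^*.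
Proof.
have h1 : forall a k, (U *m E0) a k = U a k * (k == enum_rank 0)%:R.
  move=> a' k; rewrite mxE (bigD1 k) //= big1 ?addr0.
    by rewrite mxE eqxx /= (can2_eq enum_valK enum_rankK).
  by move=> l hl; rewrite mxE (negbTE hl) mulr0.
rewrite mxE (bigD1 (enum_rank 0)) //= h1 eqxx mulr1 big1 ?addr0; first by rewrite !mxE.
by move=> k hk; rewrite h1 (negbTE hk) mulr0 mul0r.
Qed.

Lemma conj_fold (U : Op C n) : unitary U -> forall s,
  U *m foldH s *m adj U = foldr (fun i M => (U *m Hm i *m adj U) *m M) 1%:M s.
Proof.
case=> hU1 hU2; elim=> [|i s IH] /=; first by rewrite mulmx1.
rewrite -IH /foldH /= !mulmxA.
by rewrite -(mulmxA (U *m Hm i) (adj U) U) hU2 mulmx1.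
Qed.
End T.

Unset Implicit Arguments. Set Strict Implicit. Set Printing Implicit Defensive.

Theorem mainTheorem18 (C : numClosedFieldType) (n : nat) (U : Op C n)
    (TA TB TC TD : 'M['F_2]_n) :
  clifford U -> tableau U TA TB TC TD ->
  forall z : bits n, z \in supp0 U ->
    (forall r : bits n, r *m TC + z \in supp0 U) /\
    (forall y : bits n, y \in supp0 U ->
       (#|[set r : bits n | (r *m TC + z == y)%R]| * #|supp0 U| = 2 ^ n)%N).
Proof.
move=> [hU [_ _]] htab z hz.
have [hU1 hU2] := hU.
have step : forall i y, y \in supp0 U -> y - row i TC \in supp0 U.
  move=> i y hy; have [_ [k hk]] := htab i.
  have e : U *m pauliXZ C 0 (ebit i) = ('i ^+ k *: pauliXZ C (row i TC) (row i TD)) *m U.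
    by rewrite -hk -mulmxA hU2 mulmx1.
  have := congr1 (fun M : Op C n => M (enum_rank y) (enum_rank (0 : bits n))) e.
  rewrite /= pauli_mulr -scalemxAl mxE pauli_mull !enum_rankK addr0 /sgn dotb0 eqxx mulr1.
  move: hy; rewrite !inE /entry => hy E.
  apply/eqP => h0; move/eqP: hy; apply; by rewrite E h0 !mulr0.
have stepV : forall r y, y \in supp0 U -> y - r *m TC \in supp0 U.
  move=> r; rewrite mulmx_sum_row; elim/big_rec: _ => [|i v _ IH] y hy; first by rewrite subr0.
  case: (F2cases (r 0 i)) => ->; first by rewrite scale0r add0r; exact: IH.
  rewrite scale1r opprD addrA; apply: IH; exact: step.
have part1 : forall r, r *m TC + z \in supp0 U.
  by move=> r; rewrite addrC -[r *m TC]opprK -mulNmx; apply: stepV.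
have inV_supp : forall y, y \in supp0 U -> inV TC (y - z).
  move=> y hy.
  have hv : vsupp TC (U *m E0 C n *m adj U).
    rewrite -(foldE0 C n) conj_fold //.
    elim: (enum 'I_n) => [|i s IH] /=; first exact: vsupp1.
    apply: vsuppM IH.
    have [_ [k hk]] := htab i.
    rewrite /Hm -scalemxAr -scalemxAl mulmxDr mulmxDl mulmx1 hU1 hk.
    apply/vsuppZ/vsuppD; [exact: vsupp1 | exact/vsuppZ/vsupp_pauli].
  have := hv (enum_rank y) (enum_rank z); rewrite !enum_rankK; apply.
  rewrite UE0 mulf_neq0 // ?conjC_eq0; by move: hy hz; rewrite !inE.
have fib : forall y, y \in supp0 U ->
    #|[set r : bits n | (r *m TC + z == y)%R]| = #|[set r : bits n | (r *m TC + z == z)%R]|.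
  move=> y hy; have [r0 e0] := inV_supp y hy.
  have inj : injective (fun r : bits n => r - r0) by move=> a b /= /addIr.
  rewrite -(card_preimset [set r : bits n | (r *m TC + z == z)%R] inj); apply: eq_card => r; rewrite !inE mulmxBl -e0.
  apply/eqP/eqP => h.

    by rewrite -h addrK subrr add0r.
  have : r *m TC - (y - z) = 0 by apply: (addIr z); rewrite add0r.
  by move/eqP; rewrite subr_eq0 => /eqP ->; rewrite subrK.
have tot : (2 ^ n = #|supp0 U| * #|[set r : bits n | (r *m TC + z == z)%R]|)%N.
  have -> : (2 ^ n)%N = #|{: bits n}| by rewrite card_mx card_Fp // mul1n.
  transitivity (\sum_(r : bits n) 1)%N; first by rewrite sum1_card.
  rewrite (partition_big (fun r : bits n => r *m TC + z) (mem (supp0 U))) /=;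
    last by move=> r _; apply: part1.
  rewrite -sum_nat_const; apply: eq_bigr => y hy.
  rewrite -(fib y hy) -sum1_card; apply: eq_bigl => r; by rewrite !inE.
split=> // y hy.
by rewrite (fib y hy) mulnC tot.
Qed.
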